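(* Let $n>30$ with $n\equiv 0 \pmod 6$, and let the sets $\mathcal{H}_i$ of subgroups and $\Pi_i$ of permutations of $S_n$ ($-1\le i\le n/3-1$) be as defined in the context. Suppose $-1\le i<j\le n/3-1$, $H_i\in\mathcal{H}_i$ and $H_j\in\mathcal{H}_j$. Then $\Pi_i\cap H_j=\Pi_j\cap H_i=\emptyset$.
   Context: $S_n$ is the symmetric group on $\{1,\dots,n\}$, $n\equiv 0\pmod 6$. Subgroup classes: $\mathcal{H}_{-1}$ is the set of stabilizers in $S_n$ of partitions of $\{1,\dots,n\}$ into two blocks of size $n/2$ (a stabilizer may swap the two blocks); $\mathcal{H}_0=\{A_n\}$; for $1\le i\le n/3-1$, $\mathcal{H}_i$ is the set of setwise stabilizers in $S_n$ of $i$-element subsets of $\{1,\dots,n\}$. Permutation classes (cycle lengths listed, all of which together account for all $n$ points, so no further fixed points): $\Pi_{-1}$ is the set of $n$-cycles; $\Pi_0$ is the set of elements that are a product of two disjoint cycles of lengths $n/2-1$ and $n/2+1$ if $n/2$ is even, respectively of lengths $n/2-2$ and $n/2+2$ if $n/2$ is odd; $\Pi_1$ is the set of elements with exactly one fixed point and two further cycles of lengths $n/2-2$ and $n/2+1$; for odd $i$ with $3\le i\le n/3-1$, $\Pi_i$ is the set of products of three disjoint cycles of lengths $i$, $(n-i-1)/2$, $(n-i+1)/2$; for even $i$ with $2\le i\le n/3-1$ and $(n-i)/2$ odd, $\Pi_i$ is the set of products of three disjoint cycles of lengths $i,(n-i)/2,(n-i)/2$; for even $i$ with $4\le i\le n/3-1$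 and $(n-i)/2$ even, $\Pi_i$ is the set of products of three disjoint cycles of lengths $i,(n-i)/2-1,(n-i)/2+1$; if $(n-2)/2$ is even, $\Pi_2$ is the set of products of three disjoint cycles of lengths $2, n/2-4, n/2+2$. *)

(* Defs.v *)
From mathcomp Require Import all_boot all_algebra all_fingroup all_solvable.
Set Implicit Arguments. Unset Strict Implicit. Unset Printing Implicit Defensive.

(* Cycle type of a permutation: the multiset (as a sorted list) of the sizes of
   all its cycles (orbits), fixed points counting as cycles of length 1. *)
Definition cycle_type (n : nat) (s : {perm 'I_n}) : seq nat :=
  sort leq (map (fun X : {set 'I_n} => #|X|) (enum (porbits s))).

Definition has_cycles (n : nat) (s : {perm 'I_n}) (l : seq nat) : bool :=
  perm_eq (cycle_type s) l.

Definition Pi (n : nat) (i : int) (s : {perm 'I_n}) : bool :=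
  match i with
  | Negz 0 => has_cycles s [:: n]                                   (* i = -1 *)
  | Negz _ => false
  | Posz 0 => if ~~ odd (n %/ 2) then has_cycles s [:: (n %/ 2).-1; (n %/ 2).+1]
              else has_cycles s [:: n %/ 2 - 2; n %/ 2 + 2]
  | Posz 1 => has_cycles s [:: 1; n %/ 2 - 2; n %/ 2 + 1]
  | Posz k =>
      if odd k then has_cycles s [:: k; (n - k).-1 %/ 2; (n - k).+1 %/ 2]
      else if odd ((n - k) %/ 2) then
        has_cycles s [:: k; (n - k) %/ 2; (n - k) %/ 2]
      else if k == 2 then has_cycles s [:: 2; n %/ 2 - 4; n %/ 2 + 2]
      else has_cycles s [:: k; ((n - k) %/ 2).-1; ((n - k) %/ 2).+1]
  end.

Definition Hclass (n : nat) (i : int) (H : {set {perm 'I_n}}) : Prop :=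
  match i with
  | Negz 0 => (* stabilizer of a partition {A, ~A} into two blocks of size n/2 *)
      exists A : {set 'I_n}, #|A| = n %/ 2 /\
        H = ('N([set A; ~: A] | 'P^*))%g
  | Negz _ => False
  | Posz 0 => H = ('Alt_('I_n))%g
  | Posz k =>
      exists A : {set 'I_n}, #|A| = k /\ H = ('N(A | 'P))%g
  end.

(* Main.v *)
Require Import Defs.
From mathcomp Require Import all_boot all_algebra all_fingroup all_solvable.
From mathcomp Require Import zify.
Set Implicit Arguments. Unset Strict Implicit. Unset Printing Implicit Defensive.

Lemma ss_mask (l v w : seq nat) : perm_eq l (v ++ w) -> exists m, sumn v = sumn (mask m l).
Proof.
elim: l v w => [|x l IH] v w.
  move=> /perm_size; rewrite size_cat /= => h.
  exists [::]; case: v h => //.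
move=> hp.
have : x \in v ++ w by rewrite -(perm_mem hp) mem_head.
rewrite mem_cat => /orP[xv|xw].
  have pv := perm_to_rem xv.
  have : perm_eq (x :: l) (x :: (rem x v ++ w)).
    by apply: (perm_trans hp); rewrite -cat_cons perm_cat2r.
  rewrite perm_cons => /IH [m hm]; exists (true :: m).
  by rewrite (perm_sumn pv) /= hm.
have pw := perm_to_rem xw.
have : perm_eq (x :: l) (x :: (v ++ rem x w)).
  apply: (perm_trans hp); rewrite perm_sym -[x :: _]cat1s perm_catCA cat1s.
  by rewrite perm_cat2l perm_sym.
rewrite perm_cons => /IH [m hm]; exists (false :: m).
by rewrite hm.
Qed.

Section Orb.
Variable n : nat.
Variable s : {perm 'I_n}.

Lemma ct_perm : perm_eq (cycle_type s) (map (fun X : {set 'I_n} => #|X|) (enum (porbits s))).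
Proof. by rewrite /cycle_type perm_sort. Qed.

Lemma porbit_s x y : y \in porbit s x -> s y \in porbit s x.
Proof.
move=> hy; have e : porbit s y = porbit s x by apply/eqP; rewrite eq_porbit_mem.
by rewrite -e -{1}(expg1 s) mem_porbit.
Qed.

Lemma inv_porbit (A : {set 'I_n}) : (forall y, (s y \in A) = (y \in A)) ->
  forall x y, y \in porbit s x -> (y \in A) = (x \in A).
Proof.
move=> hA x y /porbitP [i ->]; elim: i => [|i IH]; first by rewrite expg0 perm1.
by rewrite expgSr permM hA.
Qed.

Lemma sub_sum (A : {set 'I_n}) l : (forall y, (s y \in A) = (y \in A)) ->
  has_cycles s l -> exists m, #|A| = sumn (mask m l).
Proof.
move=> hA hc.
pose f := fun X : {set 'I_n} => #|X|.
pose r := enum (porbits s).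
pose a := fun X : {set 'I_n} => X \subset A.
have e1 : #|A| = \sum_(X in porbits s) (if a X then f X else 0).
  rewrite -sum1_card big_mkcond /= (partition_big_imset (porbit s)) /=.
  apply: eq_bigr => _ /imsetP [y _ ->].
  rewrite /a /f.
  have ey : forall x, (porbit s x == porbit s y) = (x \in porbit s y) by move=> x; rewrite eq_porbit_mem.
  rewrite (eq_bigl _ _ ey).
  case: ifP => sub.
    rewrite -sum1_card; apply: eq_bigr => x xi.
    by rewrite (subsetP sub).
  apply: big1 => x xi.
  have ex := inv_porbit hA xi.
  case: ifP => // xA; exfalso; move/negP: sub; apply; apply/subsetP => z zi.
  by rewrite (inv_porbit hA zi) -ex.
have e2 : #|A| = sumn (map f (filter a r)).
  by rewrite e1 -big_enum /= -big_mkcond -big_filter sumnE big_map.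
have p1 : perm_eq l (map f (filter a r) ++ map f (filter (predC a) r)).
  have pf : perm_eq (filter a r ++ filter (predC a) r) r by apply/permPl; exact: perm_filterC.
  rewrite -map_cat perm_sym (perm_trans (perm_map f pf)) //.
  by apply: (perm_trans _ hc); rewrite perm_sym ct_perm.
have [m hm] := ss_mask p1; exists m; by rewrite e2.
Qed.

Lemma swap_even (A : {set 'I_n}) l : (forall y, (s y \in A) = (y \notin A)) ->
  has_cycles s l -> all (fun x => ~~ odd x) l.
Proof.
rewrite /has_cycles => hA hc.
rewrite -(perm_all _ hc) (perm_all _ (ct_perm)) all_map; apply/allP => X.
rewrite mem_enum => /imsetP [y _ ->] /=.
have le1 : #|porbit s y :&: A| <= #|porbit s y :\: A|.
  rewrite -(card_imset _ (@perm_inj _ s)); apply: subset_leq_card; apply/subsetP => _ /imsetP [z + ->].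
  by rewrite !inE => /andP [zX zA]; rewrite hA zA porbit_s.
have le2 : #|porbit s y :\: A| <= #|porbit s y :&: A|.
  rewrite -(card_imset _ (@perm_inj _ s)); apply: subset_leq_card; apply/subsetP => _ /imsetP [z + ->].
  by rewrite !inE => /andP [zA zX]; rewrite hA zA porbit_s.
rewrite -(cardsID A (porbit s y)); lia.
Qed.

Lemma parity_ct l : has_cycles s l -> odd_perm s = odd n (+) odd (size l).
Proof.
move=> hc; rewrite /odd_perm card_ord cardE -(size_map (fun X : {set 'I_n} => #|X|)).
by rewrite -(perm_size ct_perm) (perm_size hc).
Qed.
End Orb.

Lemma Hk_fact n k H (s : {perm 'I_n}) l : Hclass (Posz k.+1) H -> s \in H ->
  has_cycles s l -> exists m, k.+1 = sumn (mask m l).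
Proof.
move=> /= [A [cA ->]] /astabsP hs hc; rewrite -cA; apply: sub_sum hc.
by move=> y; exact: (hs y).
Qed.

Lemma H0_fact n H (s : {perm 'I_n}) l : Hclass (Posz 0) H -> s \in H ->
  has_cycles s l -> ~~ (odd n (+) odd (size l)).
Proof.
move=> /= -> ; rewrite Alt_even => hs hc; by rewrite -(parity_ct hc).
Qed.

Lemma Hm1_fact n H (s : {perm 'I_n}) l : Hclass (Negz 0) H -> s \in H ->
  has_cycles s l -> (exists m, n %/ 2 = sumn (mask m l)) \/ all (fun x => ~~ odd x) l.
Proof.
move=> /= [A [cA ->]] /astabsP hs hc.
have := hs A; rewrite !inE eqxx ?orbT ?orTb => /orP [] /eqP E.
  have {}E : [set s x | x in A] = A by exact: E.
  left; rewrite -cA; apply: sub_sum hc => y.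
  by rewrite -{1}E (mem_imset _ _ (@perm_inj _ s)).
have {}E : [set s x | x in A] = ~: A by exact: E.
right; apply: (swap_even (A := A)) hc => y.
by rewrite -[y \in A](mem_imset _ _ (@perm_inj _ s)) E inE negbK.
Qed.

Definition Hprop (n : nat) (h : int) (l : seq nat) : Prop :=
  match h with
  | Negz 0 => (exists m, n %/ 2 = sumn (mask m l)) \/ all (fun x => ~~ odd x) l
  | Negz _ => False
  | Posz 0 => ~~ (odd n (+) odd (size l))
  | Posz k => exists m, k = sumn (mask m l)
  end.

Lemma H_fact n h H (s : {perm 'I_n}) l : Hclass h H -> s \in H ->
  has_cycles s l -> Hprop n h l.
Proof.
case: h => [[|k]|[|k]] /=.
- exact: H0_fact.
- exact: Hk_fact.
- exact: Hm1_fact.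
- by [].
Qed.

Ltac msolve := let m := fresh "m" in
  case=> m; case: m => [|[] [|[] [|[] [|? ?]]]]; rewrite /=; lia.

Ltac hsolve := first
  [ msolve
  | case; [msolve | rewrite /=; lia]
  | rewrite /=; lia ].

Lemma key n (s : {perm 'I_n}) p h :
  30 < n -> n %% 6 = 0 -> (-1 <= p)%R -> (p <= (n %/ 3)%:Z - 1)%R ->
  (-1 <= h)%R -> (h <= (n %/ 3)%:Z - 1)%R -> p != h ->
  Pi p s -> (forall l, has_cycles s l -> Hprop n h l) -> False.
Proof.
move=> n30 n6 p1 p2 h1 h2 pne hP hH.
case: p p1 p2 pne hP => [[|[|k]]|[|k]] p1 p2 pne /=.
- case: ifP => o hc; move: (hH _ hc); clear hH;
  case: h h1 h2 pne => [[|k']|[|k']] h1 h2 pne /=; hsolve.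
- move=> hc; move: (hH _ hc); clear hH;
  case: h h1 h2 pne => [[|k']|[|k']] h1 h2 pne /=; hsolve.
- case: ifP => o1; [|case: ifP => o2; [|case: ifP => o3]] => hc; move: (hH _ hc); clear hH;
  case: h h1 h2 pne => [[|k']|[|k']] h1 h2 pne /=; hsolve.
- move=> hc; move: (hH _ hc); clear hH;
  case: h h1 h2 pne => [[|k']|[|k']] h1 h2 pne /=; hsolve.
- by [].
Qed.

Theorem lemma3p6 (n : nat) (i j : int) (Hi Hj : {set {perm 'I_n}}) :
  30 < n -> n %% 6 = 0 ->
  (-1 <= i)%R -> (i < j)%R -> (j <= (n %/ 3)%:Z - 1)%R ->
  Hclass i Hi -> Hclass j Hj ->
  [set s | Pi i s] :&: Hj = set0 /\ [set s | Pi j s] :&: Hi = set0.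
Proof.
move=> n30 n6 i1 ij j2 hi hj.
have i2 : (i <= (n %/ 3)%:Z - 1)%R by lia.
have j1 : (-1 <= j)%R by lia.
have nij : i != j by lia.
split; apply/setP => s; rewrite !inE; apply/negbTE/andP => -[hp hs].
- apply: (key n30 n6 i1 i2 j1 j2 nij hp) => l hc; exact: H_fact hj hs hc.
- apply: (key n30 n6 j1 j2 i1 i2 _ hp) => [|l hc]; first by rewrite eq_sym.
  exact: H_fact hi hs hc.
Qed.
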